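(* Let $\mathbb{F}$ be any finite field. For inputs $\alpha,\beta\in\mathbb{F}$, choose $a_1,a_2,a_3,b_1,b_2,b_3\in\mathbb{F}$ uniformly at random subject to $a_1+a_2+a_3=\alpha$ and $b_1+b_2+b_3=\beta$, and define $$y_1=(a_2+a_3)(b_2+b_3),\qquad y_2=a_1b_1+a_1b_3+a_3b_1,\qquad y_3=a_1b_2+a_2b_1.$$ (These are the output shares of the $1$-private $3$-server greedy-monomial CNF HSS for multiplication, where server $j$ holds $(a_i,b_i)_{i\ne j}$ and $y_1+y_2+y_3=\alpha\beta$.) Then the joint distribution of $(y_1,y_2,y_3)$ depends only on $\alpha\beta$; that is, for all $\alpha,\beta,\alpha',\beta'\in\mathbb{F}$ with $\alpha\beta=\alpha'\beta'$, the distributions for $(\alpha,\beta)$ and $(\alpha',\beta')$ are identical. In particular this HSS is symmetrically private.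
   Context: An HSS is symmetrically private (SHSS) if for every function $f$ in its class and every input $\mathbf{x}$, the joint distribution of the output shares depends only on $f(\mathbf{x})$. *)

(* Defs.v *)
From mathcomp Require Import all_boot all_order all_algebra all_field.
Set Implicit Arguments. Unset Strict Implicit. Unset Printing Implicit Defensive.
Import GRing.Theory.
Local Open Scope ring_scope.

Definition rnd (F : finFieldType) : finType :=
  ((F * F * F) * (F * F * F))%type.

Definition valid_sharing (F : finFieldType) (alpha beta : F) (r : rnd F) : bool :=
  let: ((a1, a2, a3), (b1, b2, b3)) := r in
  (a1 + a2 + a3 == alpha) && (b1 + b2 + b3 == beta).

Definition out_shares (F : finFieldType) (r : rnd F) : F * F * F :=
  let: ((a1, a2, a3), (b1, b2, b3)) := r in
  ((a2 + a3) * (b2 + b3), a1 * b1 + a1 * b3 + a3 * b1, a1 * b2 + a2 * b1).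

Definition out_dist (F : finFieldType) (alpha beta : F) (y : F * F * F) : rat :=
  (#|[set r : rnd F | valid_sharing alpha beta r && (out_shares r == y)]|%:R)
  / (#|[set r : rnd F | valid_sharing alpha beta r]|%:R).

(* Main.v *)
Require Import Defs.
From mathcomp Require Import all_boot all_order all_algebra all_field.
From mathcomp Require Import ring.
Set Implicit Arguments. Unset Strict Implicit. Unset Printing Implicit Defensive.
Import GRing.Theory.
Local Open Scope ring_scope.

Section Proofs.
Variable F : finFieldType.

Lemma card_sum (P : pred (rnd F)) : #|[set r | P r]| = (\sum_r (P r : nat))%N.
Proof.
rewrite -sum1_card big_mkcond /=; apply: eq_bigr => r _.
by rewrite inE; case: (P r).
Qed.

Lemma sum_triple (G : F * F * F -> nat) :
  (\sum_x G x = \sum_a1 \sum_a2 \sum_a3 G (a1, a2, a3))%N.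
Proof.
rewrite pair_big /=. rewrite (eq_bigr (fun p => \sum_a3 G (p, a3))).
  2: by move=> [a1 a2] _; rewrite /=.
rewrite pair_big /=; apply: eq_bigr => -[[a1 a2] a3] _ //.
Qed.

Lemma sum_rnd (G : rnd F -> nat) :
  (\sum_r G r = \sum_x \sum_y G (x, y))%N.
Proof. by rewrite pair_big; apply: eq_bigr => -[x y]. Qed.

Lemma sum_solve (a b alpha : F) (K : F -> nat) :
  (\sum_c (if (a + b + c == alpha)%R then K c else 0) = K (alpha - a - b)%R)%N.
Proof.
rewrite -big_mkcond /=.
rewrite (eq_bigl (fun c => c == alpha - a - b)); first by rewrite big_pred1_eq.
move=> c /=; apply/eqP/eqP => [<-|->]; ring.
Qed.

Lemma reduce (alpha beta : F) (P : pred (F * F * F)) :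
  #|[set r | valid_sharing alpha beta r && P (out_shares r)]| =
  (\sum_a1 \sum_a2 \sum_b1 \sum_b2
    (P ((alpha - a1) * (beta - b1),
        alpha * beta - (alpha - a1) * (beta - b1) - (a1 * b2 + a2 * b1),
        a1 * b2 + a2 * b1)%R : nat))%N.
Proof.
rewrite card_sum sum_rnd sum_triple.
apply: eq_bigr => a1 _; apply: eq_bigr => a2 _.
rewrite (eq_bigr (fun a3 => if a1 + a2 + a3 == alpha then
   (\sum_y (valid_sharing alpha beta (a1, a2, a3, y) &&
        P (out_shares (a1, a2, a3, y)) : nat))%N else 0%N)); last first.
  move=> a3 _; case: ifP => H //=.
  by apply: big1 => -[[b1 b2] b3] _; rewrite /valid_sharing H.
rewrite sum_solve sum_triple; apply: eq_bigr => b1 _; apply: eq_bigr => b2 _.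
rewrite (eq_bigr (fun b3 => if b1 + b2 + b3 == beta then
   (P ((alpha - a1) * (beta - b1),
        alpha * beta - (alpha - a1) * (beta - b1) - (a1 * b2 + a2 * b1),
        a1 * b2 + a2 * b1)%R : nat) else 0%N)); last first.
  move=> b3 _; rewrite /valid_sharing /out_shares.
  have -> : a1 + a2 + (alpha - a1 - a2) == alpha by apply/eqP; ring.
  case: ifP => H //=.
  move/eqP: H => H.
  congr (nat_of_bool (P (_, _, _))); rewrite -H; ring.
by rewrite sum_solve.
Qed.

Lemma lin_count (c d : F) (K : F -> nat) : (c != 0) || (d != 0) ->
  (\sum_a \sum_b K (c * b + a * d)%R = #|F| * \sum_t K t)%N.
Proof.
have sumc : forall n : nat, (\sum_(x : F) n = #|F| * n)%N.
  by move=> n; rewrite sum_nat_const.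
case/orP => Hn.
  rewrite -sumc; apply: eq_bigr => a _.
  have inj : injective (fun b => c * b + a * d).
    by move=> x y /addIr /mulfI; apply.
  by rewrite [RHS](reindex_inj inj).
rewrite exchange_big -sumc; apply: eq_bigr => b _.
have inj : injective (fun a => c * b + a * d).
  by move=> x y /addrI /mulIf; apply.
by rewrite [RHS](reindex_inj inj).
Qed.

Definition Qg (y : F * F * F) (g x t : F) : nat := ((x, g - x - t, t) == y).

Definition E1 (y : F * F * F) (g : F) : nat := (#|F| * \sum_t Qg y g g t)%N.
Definition E2 (y : F * F * F) (g : F) : nat :=
  (#|F| * #|F| * Qg y g g 0%R + \sum_(p : F * F) #|F| * \sum_t Qg y g (p.1 * p.2)%R t)%N.

Lemma key (alpha beta : F) (y : F * F * F) :
  (#|[set r | valid_sharing alpha beta r && (out_shares r == y)]|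
     + E1 y (alpha * beta)%R = E2 y (alpha * beta)%R)%N.
Proof.
rewrite (reduce alpha beta (fun z => z == y)).
rewrite (eq_bigr (fun a1 => \sum_b1 \sum_a2 \sum_b2
   Qg y (alpha * beta)%R ((alpha - a1) * (beta - b1))%R (a1 * b2 + a2 * b1)%R)%N); last first.
  by move=> a1 _; rewrite exchange_big.
rewrite pair_big /=.
rewrite (bigD1 (0, 0)) //= !subr0.
have H0 : (\sum_a2 \sum_b2 Qg y (alpha * beta)%R (alpha * beta)%R (0 * b2 + a2 * 0)%R
   = #|F| * #|F| * Qg y (alpha * beta)%R (alpha * beta)%R 0%R)%N.
  rewrite (eq_bigr (fun _ => #|F| * Qg y (alpha * beta)%R (alpha * beta)%R 0%R)%N).
    by rewrite sum_nat_const mulnA.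
  move=> a2 _; rewrite (eq_bigr (fun _ => Qg y (alpha * beta)%R (alpha * beta)%R 0%R)).
    by rewrite sum_nat_const.
  by move=> b2 _; rewrite mul0r mulr0 addr0.
rewrite H0 /E2 /E1 -addnA; congr addn.
have Hs : forall p : F * F, p != (0, 0) ->
  (\sum_a2 \sum_b2 Qg y (alpha * beta)%R ((alpha - p.1) * (beta - p.2))%R (p.1 * b2 + a2 * p.2)%R
   = #|F| * \sum_t Qg y (alpha * beta)%R ((alpha - p.1) * (beta - p.2))%R t)%N.
  move=> [p1 p2] Hp; apply: lin_count => /=.
  by case: (p1 =P 0) Hp => [->|]; case: (p2 =P 0) => [->|] //=; rewrite eqxx.
rewrite (eq_bigr _ (fun p (Hp : true && (p != (0,0))) => Hs p Hp)).
have inj : injective (fun p : F * F => (alpha - p.1, beta - p.2)).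
  move=> [x1 x2] [z1 z2] /= [] /subrI -> /subrI -> //.
rewrite [X in (_ = X)%N](reindex_inj inj) /=.
rewrite [X in (_ = X)%N](bigD1 (0,0)) //= !subr0 addnC.
reflexivity.
Qed.

End Proofs.

Theorem mainTheorem18 (F : finFieldType) (alpha beta alpha' beta' : F) :
  alpha * beta = alpha' * beta' ->
  forall y : F * F * F, out_dist alpha beta y = out_dist alpha' beta' y.
Proof.
move=> Hab y; rewrite /out_dist.
have HD : forall a b : F, [set r : rnd F | valid_sharing a b r] =
     [set r | valid_sharing a b r && (fun _ => true) (out_shares r)].
  by move=> a b; apply/setP => r; rewrite !inE andbT.
have HN : #|[set r | valid_sharing alpha beta r && (out_shares r == y)]| =
          #|[set r | valid_sharing alpha' beta' r && (out_shares r == y)]|.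
  apply/(@addIn (E1 y (alpha * beta))).
  rewrite (key alpha beta y) Hab.
symmetry; exact: (key alpha' beta' y).
by rewrite HN !HD (reduce alpha beta (fun _ => true)) (reduce alpha' beta' (fun _ => true)).
Qed.
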